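(* Let $X$ be a comical set, $x,y$ $0$-cubes of $X$, and $f,g$ $1$-cubes of $X$ with $f\partial_{1,0}=g\partial_{1,0}=x$ and $f\partial_{1,1}=g\partial_{1,1}=y$. Describe a $2$-cube $s$ by its quadruple of faces $(s\partial_{1,0},\,s\partial_{1,1},\,s\partial_{2,0},\,s\partial_{2,1})$. Consider the following eight boundary conditions: (1) $(g,\,y\sigma_1,\,f,\,y\sigma_1)$; (2) $(f,\,y\sigma_1,\,g,\,y\sigma_1)$; (3) $(f,\,g,\,x\sigma_1,\,y\sigma_1)$; (4) $(g,\,f,\,x\sigma_1,\,y\sigma_1)$; (5) $(x\sigma_1,\,y\sigma_1,\,f,\,g)$; (6) $(x\sigma_1,\,y\sigma_1,\,g,\,f)$; (7) $(x\sigma_1,\,f,\,x\sigma_1,\,g)$; (8) $(x\sigma_1,\,g,\,x\sigma_1,\,f)$. If there is a marked $2$-cube in $X$ satisfying one of these boundary conditions, then for each of the other seven conditions there is also a marked $2$-cube in $X$ satisfying it.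
   Context: Cubical sets are presheaves on the box category $\square$ (objects $[1]^n=\{0<1\}^n$; morphisms generated by faces $\partial_{i,\varepsilon}\colon[1]^{n-1}\to[1]^n$ inserting $\varepsilon$ as $i$-th coordinate, degeneracies $\sigma_i\colon[1]^n\to[1]^{n-1}$ deleting the $i$-th coordinate, and connections $\gamma_{i,1},\gamma_{i,0}\colon[1]^n\to[1]^{n-1}$ replacing $x_i,x_{i+1}$ by their max, resp. min); operators act on the right, so for a $0$-cube $x$, $x\sigma_1$ is the degenerate $1$-cube at $x$. A cube is degenerate if it is $x\sigma_i$ or $x\gamma_{i,\varepsilon}$; composites of faces have unique normal forms $\partial_{k_1,\varepsilon_1}\cdots\partial_{k_t,\varepsilon_t}$, $k_1>\dots>k_t$. A marked cubical set is a cubical set with marked cubes of positive dimension containing all degenerate cubes. $\tau_jX$ is $X$ with all cubes of dimension $\ge j+1$ marked. For $n\ge1$, $1\le k\le n$, $\varepsilon\in\{0,1\}$: $\square^n_{k,\varepsilon}$ is $\square^n$ in which a non-degenerate positive-dimensional face in normal form is marked iff none of its factors is $\partial_{k-1,\varepsilon},\partial_{k,0},\partial_{k,1},\partial_{k+1,\varepsilon}$; $\sqcap^n_{k,\varepsilon}$ is the union of codimension-one faces except $\partial_{k,\varepsilon}$, regularly marked. For $n\ge2$, $(\square^n_{k,\varepsilon})''=\tau_{n-2}\square^n_{k,\varepsilon}$ and $(\square^n_{k,\varepsilon})'$ is $\square^n_{k,\varepsilon}$ with all $(n-1)$-faces other than $\partial_{k,\varepsilon}$ marked. A comical set is a marked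 cubical set with the right lifting property against all $\sqcap^n_{k,\varepsilon}\hookrightarrow\square^n_{k,\varepsilon}$ and all $(\square^n_{k,\varepsilon})'\hookrightarrow(\square^n_{k,\varepsilon})''$. *)

(* Defs.v *)
(* Coordinates and operator
   indices are 0-based internally: the paper's d_{i,e}, s_i, g_{i,e}
   (1-based i) are [face (i-1) e], [degen (i-1)], [conn (i-1) e]. *)
From mathcomp Require Import all_boot.
From mathcomp Require Import zify.
Set Implicit Arguments. Unset Strict Implicit. Unset Printing Implicit Defensive.

(* points of the cube [1]^n = {0<1}^n *)
Definition pt (n : nat) := n.-tuple bool.

Definition ins (i : nat) (e : bool) (s : seq bool) := take i s ++ e :: drop i s.
Definition del (i : nat) (s : seq bool) := take i s ++ drop i.+1 s.
Definition cn (i : nat) (e : bool) (s : seq bool) :=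
  take i s ++ (if e then nth false s i || nth false s i.+1
               else nth false s i && nth false s i.+1) :: drop i.+2 s.

Lemma ins_sizeP n (i : 'I_n.+1) e (t : pt n) : size (ins i e t) == n.+1.
Proof.
rewrite /ins size_cat /= size_take size_drop size_tuple.
have := ltn_ord i; case: ifP => H1 H2; apply/eqP; lia.
Qed.

Lemma del_sizeP n (i : 'I_n.+1) (t : pt n.+1) : size (del i t) == n.
Proof.
rewrite /del size_cat size_take size_drop size_tuple.
have := ltn_ord i; case: ifP => H1 H2; apply/eqP; lia.
Qed.

Lemma cn_sizeP n (i : 'I_n.+1) e (t : pt n.+2) : size (cn i e t) == n.+1.
Proof.
rewrite /cn size_cat /= size_take size_drop size_tuple.
have := ltn_ord i; case: ifP => H1 H2; apply/eqP; lia.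
Qed.

Definition face n (i : 'I_n.+1) (e : bool) (t : pt n) : pt n.+1 :=
  Tuple (ins_sizeP i e t).
Definition degen n (i : 'I_n.+1) (t : pt n.+1) : pt n := Tuple (del_sizeP i t).
Definition conn n (i : 'I_n.+1) (e : bool) (t : pt n.+2) : pt n.+1 :=
  Tuple (cn_sizeP i e t).

Inductive boxmap : forall m n : nat, (pt m -> pt n) -> Prop :=
| bm_id n : boxmap (@id (pt n))
| bm_comp m n p (f : pt m -> pt n) (g : pt n -> pt p) :
    boxmap f -> boxmap g -> boxmap (g \o f)
| bm_face n (i : 'I_n.+1) e : boxmap (@face n i e)
| bm_degen n (i : 'I_n.+1) : boxmap (@degen n i)
| bm_conn n (i : 'I_n.+1) e : boxmap (@conn n i e).

Definition hom (m n : nat) := {f : pt m -> pt n | boxmap f}.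

Definition idh n : hom n n := exist _ id (bm_id n).
(* [comph f g] is the composite "g after f" *)
Definition comph m n p (f : hom m n) (g : hom n p) : hom m p :=
  exist _ (proj1_sig g \o proj1_sig f) (bm_comp (proj2_sig f) (proj2_sig g)).
Definition dface n (i : 'I_n.+1) e : hom n n.+1 := exist _ _ (bm_face i e).
Definition ddegen n (i : 'I_n.+1) : hom n.+1 n := exist _ _ (bm_degen i).
Definition dconn n (i : 'I_n.+1) e : hom n.+2 n.+1 := exist _ _ (bm_conn i e).

Inductive dgen : forall m n : nat, (pt m -> pt n) -> Prop :=
| dg_s n (i : 'I_n.+1) : dgen (@degen n i)
| dg_c n (i : 'I_n.+1) e : dgen (@conn n i e).

(* cubical set = presheaf on the box category; operators act on the right:
   [act h x] is x.h, and x.(g o f) = (x.g).f *)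
Record cset := CSet {
  cell : nat -> Type;
  act : forall m n, hom m n -> cell n -> cell m;
  act_id : forall n (x : cell n), act (idh n) x = x;
  act_comp : forall m n p (f : hom m n) (g : hom n p) (x : cell p),
      act (comph f g) x = act f (act g x)
}.
Arguments act {c m n}.

Definition degenerate (X : cset) n (x : cell X n) : Prop :=
  exists m (h : hom n m) (y : cell X m), dgen (proj1_sig h) /\ x = act h y.

Record mcset := MCSet {
  mX :> cset;
  marked : forall n, cell mX n -> Prop;
  marked_pos : forall x : cell mX 0, ~ marked x;
  marked_degen : forall n (x : cell mX n), degenerate x -> marked x
}.
Arguments marked {m n}.

Definition degenerate_rep m n (f : hom m n) : Prop :=
  exists p (d : hom m p) (y : hom p n), dgen (proj1_sig d) /\ f = comph d y.

(* composite of faces d_{k1,e1} ... d_{kt,et} (0-based k's), i.e. the map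
   d_{k1,e1} o ... o d_{kt,et}, given as L = [:: (k1,e1); ...; (kt,et)] *)
Definition facemap (L : seq (nat * bool)) (s : seq bool) : seq bool :=
  foldr (fun a s => ins a.1 a.2 s) s L.

Definition face_nf m n (f : hom m n) (L : seq (nat * bool)) : Prop :=
  [/\ sorted (fun a b : nat * bool => b.1 < a.1) L,
      all (fun a : nat * bool => a.1 < n) L,
      size L + m = n &
      forall p : pt m, val (proj1_sig f p) = facemap L (val p)].

(* marked cubes of [][n]_{k,e} (k is the 0-based index, paper index k+1):
   degenerate cubes, and non-degenerate positive-dimensional faces whose
   normal form contains none of d_{k-1,e}, d_{k,0}, d_{k,1}, d_{k+1,e}
   (paper indexing) *)
Definition bad_factor (k : nat) (e : bool) (a : nat * bool) : bool :=
  [|| a.1 == k, (a.1.+1 == k) && (a.2 == e) | (a.1 == k.+1) && (a.2 == e)].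

Definition markedK n (k : nat) (e : bool) m (f : hom m n) : Prop :=
  degenerate_rep f \/
  (0 < m /\ exists L, face_nf f L /\ all (fun a => ~~ bad_factor k e a) L).

Definition inbox n (k : 'I_n.+1) (e : bool) m (f : hom m n.+1) : Prop :=
  exists (i : 'I_n.+1) (d : bool), (i, d) <> (k, e) /\
    exists g : hom m n, f = comph g (dface i d).

(* right lifting property of X against the inclusion of the open box
   (regularly marked) into [][n+1]_{k,e} *)
Definition fills_boxes (X : mcset) n (k : 'I_n.+1) (e : bool) : Prop :=
  forall (phi : forall m (f : hom m n.+1), inbox k e f -> cell X m),
    (forall m p (f : hom m n.+1) (g : hom p m) (H : inbox k e f)
            (H' : inbox k e (comph g f)),
        phi p (comph g f) H' = act g (phi m f H)) ->
    (forall m (f : hom m n.+1) (H : inbox k e f),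
        markedK k e f -> marked (phi m f H)) ->
    exists z : cell X n.+1,
      (forall m (f : hom m n.+1) (H : inbox k e f), act f z = phi m f H) /\
      (forall m (f : hom m n.+1), markedK k e f -> marked (act f z)).

Definition markedK' n (k : 'I_n.+1) (e : bool) m (f : hom m n.+1) : Prop :=
  markedK k e f \/
  exists (i : 'I_n.+1) (d : bool) (Hm : m = n), (i, d) <> (k, e) /\
    f = eq_rect_r (fun m => hom m n.+1) (dface i d) Hm.

Definition markedK'' n (k : 'I_n.+1) (e : bool) m (f : hom m n.+1) : Prop :=
  markedK k e f \/ n <= m.

(* right lifting property against ([][n+1]_{k,e})' -> ([][n+1]_{k,e})'' *)
Definition lifts_marking (X : mcset) n (k : 'I_n.+1) (e : bool) : Prop :=
  forall z : cell X n.+1,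
    (forall m (f : hom m n.+1), markedK' k e f -> marked (act f z)) ->
    (forall m (f : hom m n.+1), markedK'' k e f -> marked (act f z)).

Definition comical (X : mcset) : Prop :=
  (forall n (k : 'I_n.+1) (e : bool), fills_boxes X k e) /\
  (forall n (k : 'I_n.+2) (e : bool), lifts_marking X k e).

Definition d10 : hom 1 2 := dface (@ord0 1) false.
Definition d11 : hom 1 2 := dface (@ord0 1) true.
Definition d20 : hom 1 2 := dface (@ord_max 1) false.
Definition d21 : hom 1 2 := dface (@ord_max 1) true.
Definition p10 : hom 0 1 := dface (@ord0 0) false.
Definition p11 : hom 0 1 := dface (@ord0 0) true.
Definition s1 : hom 1 0 := ddegen (@ord0 0).

Definition has_bnd (X : cset) (s : cell X 2) (q : cell X 1 * cell X 1 * cell X 1 * cell X 1) :=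
  let: (a, b, c, d) := q in
  [/\ act d10 s = a, act d11 s = b, act d20 s = c & act d21 s = d].

(* the eight boundary conditions (1)..(8), indexed 0..7 *)
Definition bnd (X : cset) (x y : cell X 0) (f g : cell X 1) (i : 'I_8) :
  cell X 1 * cell X 1 * cell X 1 * cell X 1 :=
  let xs := act s1 x in let ys := act s1 y in
  match val i with
  | 0 => (g, ys, f, ys)
  | 1 => (f, ys, g, ys)
  | 2 => (f, g, xs, ys)
  | 3 => (g, f, xs, ys)
  | 4 => (xs, ys, f, g)
  | 5 => (xs, ys, g, f)
  | 6 => (xs, f, xs, g)
  | _ => (xs, g, xs, f)
  end.

(* Main.v *)
Require Import Defs.
From mathcomp Require Import all_boot zify.
From Stdlib Require Import FunctionalExtensionality ProofIrrelevance.
Set Implicit Arguments. Unset Strict Implicit.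

Lemma homE m n (f g : hom m n) :
  (forall p, val (proj1_sig f p) = val (proj1_sig g p)) -> f = g.
Proof.
case: f g => [f Hf] [g Hg] /= H.
have E : f = g by apply: functional_extensionality => p; apply: val_inj; exact: H.
subst g; f_equal; apply: proof_irrelevance.
Qed.

Ltac hb := apply: homE; case; case => [|? [|? [|? [|? ?]]]] //= _; repeat (match goal with b : bool |- _ => case: b end); by [].

Definition infb m n (f : hom m n) (i : nat) (d : bool) : bool :=
  [forall p : pt m, nth false (val (proj1_sig f p)) i == d].

Lemma ins_del (s : seq bool) i : i < size s -> ins i (nth false s i) (del i s) = s.
Proof.
elim: s i => [|b s IH] [|i] //= Hi; first by rewrite /ins /del /= !drop0 take0.
by move: (IH i Hi); rewrite /ins /del /= => ->.
Qed.
Lemma del_ins (s : seq bool) i d : i <= size s -> del i (ins i d s) = s.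
Proof.
elim: s i => [|b s IH] [|i] //= Hi; try by rewrite /ins /del /= ?drop0 ?take0.
by move: (IH i Hi); rewrite /ins /del /= => ->.
Qed.
Lemma nth_ins (s : seq bool) i d : i <= size s -> nth false (ins i d s) i = d.
Proof.
elim: s i => [|b s IH] [|i] //= Hi.
by move: (IH i Hi); rewrite /ins /=.
Qed.

Lemma factor m n (f : hom m n.+1) (i : 'I_n.+1) d :
  infb f i d -> f = comph (comph f (ddegen i)) (dface i d).
Proof.
move=> /forallP H; apply: homE => p /=.
by rewrite -(eqP (H p)) ins_del // size_tuple ltn_ord.
Qed.

Lemma infb_comp m n (g : hom m n) (i : 'I_n.+1) d : infb (comph g (dface i d)) i d.
Proof.
apply/forallP => p /=; by rewrite nth_ins // size_tuple -ltnS ltn_ord.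
Qed.

Definition okf (k : 'I_3) (e : bool) (i : nat) (d : bool) := ~~ ((i == k) && (d == e)).

Definition compat (X : mcset) (a : nat -> bool -> cell X 2) (ok : nat -> bool -> bool) : Prop :=
 [/\ (forall d d', ok 0 d -> ok 1 d' ->
        act (if d' then d11 else d10) (a 0 d) = act (if d then d11 else d10) (a 1 d')),
     (forall d d', ok 0 d -> ok 2 d' ->
        act (if d' then d21 else d20) (a 0 d) = act (if d then d11 else d10) (a 2 d')) &
     (forall d d', ok 1 d -> ok 2 d' ->
        act (if d' then d21 else d20) (a 1 d) = act (if d then d21 else d20) (a 2 d'))].

Lemma mix m (g g' : hom m 2) (j j' : 'I_2) d d' (i i' : 'I_3) :
  (forall s s' : seq bool, size s = 2 -> size s' = 2 -> ins i d s = ins i' d' s' ->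
      s = ins j d' (del j s) /\ s' = ins j' d (del j s)) ->
  comph g (dface i d) = comph g' (dface i' d') ->
  exists h : hom m 1, g = comph h (dface j d') /\ g' = comph h (dface j' d).
Proof.
move=> S H; exists (comph g (ddegen j)).
have E p : ins i d (val (proj1_sig g p)) = ins i' d' (val (proj1_sig g' p)).
  exact: (congr1 (fun h => val (proj1_sig h p)) H).
split; apply: homE => p /=; have [] := S _ _ (size_tuple _) (size_tuple _) (E p); by [].
Qed.

Lemma dd1 d : dface (@ord0 1) d = if d then d11 else d10. Proof. by case: d. Qed.
Lemma dd2 d : dface (@ord_max 1) d = if d then d21 else d20. Proof. by case: d. Qed.

Ltac sbrute := move=> [|? [|? [|? ?]]] // [|? [|? [|? ?]]] //= _ _;
  repeat (match goal with b : bool |- _ => case: b end); case=> //= *; subst; by [].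

Lemma GClt (X : mcset) (k : 'I_3) (e : bool) (a : nat -> bool -> cell X 2) :
  compat a (okf k e) ->
  forall m (g g' : hom m 2) (i i' : 'I_3) d d', i < i' -> okf k e i d -> okf k e i' d' ->
  comph g (dface i d) = comph g' (dface i' d') -> act g (a i d) = act g' (a i' d').
Proof.
case=> C1 C2 C3 m g g' [[|[|[|//]]] Hi] [[|[|[|//]]] Hi'] //= d d' _ ok ok' H.
- have [|h [-> ->]] := @mix m g g' ord0 ord0 d d' _ _ _ H; first by sbrute.
  by rewrite !act_comp !dd1 C1.
- have [|h [-> ->]] := @mix m g g' ord_max ord0 d d' _ _ _ H; first by sbrute.
  by rewrite !act_comp dd1 dd2 C2.
- have [|h [-> ->]] := @mix m g g' ord_max ord_max d d' _ _ _ H; first by sbrute.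
  by rewrite !act_comp !dd2 C3.
Qed.

Lemma same m (g g' : hom m 2) (i : 'I_3) d d' :
  comph g (dface i d) = comph g' (dface i d') -> d = d' /\ g = g'.
Proof.
move=> H.
have E p : ins i d (val (proj1_sig g p)) = ins i d' (val (proj1_sig g' p)).
  exact: (congr1 (fun h => val (proj1_sig h p)) H).
have Hs p : i <= size (val (proj1_sig g p)) by rewrite size_tuple -ltnS ltn_ord.
have Hs' p : i <= size (val (proj1_sig g' p)) by rewrite size_tuple -ltnS ltn_ord.
split.
- have := congr1 (nth false ^~ i) (E [tuple of nseq m false]).
  by rewrite /= nth_ins ?Hs // nth_ins ?Hs'.
- apply: homE => p; have := congr1 (del i) (E p); by rewrite del_ins ?Hs // del_ins ?Hs'.
Qed.

Lemma GC (X : mcset) (k : 'I_3) (e : bool) (a : nat -> bool -> cell X 2) :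
  compat a (okf k e) ->
  forall m (g g' : hom m 2) (i i' : 'I_3) d d', okf k e i d -> okf k e i' d' ->
  comph g (dface i d) = comph g' (dface i' d') -> act g (a i d) = act g' (a i' d').
Proof.
move=> Hc m g g' i i' d d' ok ok' H.
case: (ltngtP i i') => [lt|gt|eq].
- exact: (GClt Hc lt ok ok' H).
- symmetry; exact: (GClt Hc gt ok' ok (esym H)).
- have E : i = i' := val_inj eq. subst i'.
  have [Ed Eg] := same H. subst d' g'. by [].
Qed.

Definition chf (k : 'I_3) (e : bool) m (f : hom m 3) : 'I_3 * bool :=
  odflt (k, e) [pick q : 'I_3 * bool | okf k e q.1 q.2 && infb f q.1 q.2].

Definition phi (X : mcset) (k : 'I_3) (e : bool) (a : nat -> bool -> cell X 2) m (f : hom m 3) : cell X m :=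
  act (comph f (ddegen (chf k e f).1)) (a (chf k e f).1 (chf k e f).2).

Lemma phiE (X : mcset) (k : 'I_3) (e : bool) (a : nat -> bool -> cell X 2) :
  compat a (okf k e) ->
  forall m (f : hom m 3) (g : hom m 2) (i : 'I_3) d, okf k e i d ->
  f = comph g (dface i d) -> phi k e a f = act g (a i d).
Proof.
move=> Hc m f g i d ok Hf; rewrite /phi /chf.
case: pickP => [[i' d'] /andP[ok' inf']|none] /=.
- apply: (GC Hc) => //; by rewrite -(factor inf') Hf.
- by have := none (i, d); rewrite /= ok Hf infb_comp.
Qed.

Lemma ne_ok (k : 'I_3) e (i : 'I_3) d : (i, d) <> (k, e) -> okf k e i d.
Proof.
move=> H; apply/negP => /andP[/eqP Ei /eqP Ed]; apply: H; rewrite Ed; congr pair; exact: val_inj.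
Qed.

Lemma ok_ne (k : 'I_3) e (i : 'I_3) d : okf k e i d -> (i, d) <> (k, e).
Proof. by move=> ok [Ei Ed]; rewrite Ei Ed /okf !eqxx in ok. Qed.

Lemma fill3 (X : mcset) (HX : comical X) (k : 'I_3) (e : bool) (a : nat -> bool -> cell X 2) :
  compat a (okf k e) ->
  (forall (i : 'I_3) d, okf k e i d -> marked (a i d)) ->
  (forall (j : 'I_2) (i : 'I_3) b d, j < i -> ~~ bad_factor k e (nat_of_ord i, d) ->
      ~~ bad_factor k e (nat_of_ord j, b) -> marked (act (dface j b) (a i d))) ->
  exists t, marked t /\ compat (fun i d => if okf k e i d then a i d else t) (fun _ _ => true).
Proof.
move=> Hc Hm He.
pose ph := fun m (f : hom m 3) (_ : inbox k e f) => phi k e a f.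
have Fb := HX.1 2 k e.
have [z [Hz1 Hz2]] : exists z : cell X 3,
    (forall m (f : hom m 3) (H : inbox k e f), act f z = ph m f H) /\
    (forall m (f : hom m 3), markedK k e f -> marked (act f z)).
  apply: Fb.
  - move=> m p f g0 [i [d [ne [h Hf]]]] H'.
    rewrite /ph (phiE Hc (g:=h) (ne_ok ne) Hf) (phiE Hc (g:=comph g0 h) (ne_ok ne)) ?act_comp //.
    by rewrite Hf; apply: homE.
  - move=> m f H Hmk; rewrite /ph.
    case: Hmk => [[p [dd [yy [Hg Ef]]]] | [Hm0 [L [[Hsort Hall Hsz Hpt] Hbad]]]].
    + case: H => i [d [ne [h Hf]]].
      have inf : infb f i d by rewrite Hf infb_comp.
      rewrite (phiE Hc (ne_ok ne) (factor inf)) Ef.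
      apply: marked_degen; exists p, dd, (act (comph yy (ddegen i)) (a i d)); split=> //.
      by rewrite -act_comp; congr act; apply: homE.
    + case: L Hsort Hall Hsz Hpt Hbad => [|[k1 e1] [|[k2 e2] [|? ?]]] /= Hsort Hall Hsz Hpt Hbad.
      * have Em : m = 3 by lia.
        subst m; case: H => i [d [ne [h Hf]]].
        have := infb_comp h i d; rewrite -Hf => /forallP /(_ [tuple of nseq 3 (~~ d)]) /eqP.
        move=> E; have E2 : nth false (tval (proj1_sig f [tuple of nseq 3 (~~ d)])) i = d := E.
        rewrite Hpt in E2; move: E2; clear E; case: d {ne Hf} => /=; case: i => [[|[|[|]]] ?] //=.
      * have Em : m = 2 by lia.
        subst m; move: Hall Hbad; rewrite !andbT => Hk1 Hbad.
        have Ef : f = comph (idh 2) (dface (Ordinal Hk1) e1) by apply: homE => p; exact: (Hpt p).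
        have ok : okf k e (Ordinal Hk1) e1.
          move: Hbad; rewrite /bad_factor /okf /= => /norP [H1 _].
          by rewrite (negbTE H1).
        rewrite (phiE Hc ok Ef) act_id; exact: Hm.
      * have Em : m = 1 by lia.
        subst m; move: Hall Hbad Hsort; rewrite !andbT => /andP [Hk1 Hk2] /andP [Hb1 Hb2] H21.
        have Hk2' : k2 < 2 by lia.
        have Ef : f = comph (dface (Ordinal Hk2') e2) (dface (Ordinal Hk1) e1)
          by apply: homE => p; exact: (Hpt p).
        have ok : okf k e (Ordinal Hk1) e1.
          move: Hb1; rewrite /bad_factor /okf /= => /norP [H1 _].
          by rewrite (negbTE H1).
        rewrite (phiE Hc ok Ef); exact: He.
      * lia.
have Hface : forall (i : 'I_3) d, okf k e i d -> act (dface i d) z = a i d.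
  move=> i d ok.
  have Ef : dface i d = comph (idh 2) (dface i d) by apply: homE.
  have Hin : inbox k e (dface i d).
    exists i, d; split; first exact: ok_ne.
    by exists (idh 2).
  by rewrite (Hz1 _ _ Hin) /ph (phiE Hc ok Ef) act_id.
have Ht : marked (act (dface k e) z).
  have L := HX.2 1 k e z.
  apply: (L _ 2 (dface k e)); last by right.
  move=> m f [Hk|[i [d [Hm0 [ne Hf]]]]]; first exact: Hz2.
  subst m; rewrite Hf; change (marked (act (dface i d) z)); rewrite Hface; last exact: ne_ok. exact/Hm/ne_ok.
exists (act (dface k e) z); split => //.
have Ha : forall (i : 'I_3) d,
    (if okf k e i d then a i d else act (dface k e) z) = act (dface i d) z.
  move=> i d; case: ifP => ok; first by rewrite Hface.
  move/negbFE: ok => /andP[/eqP Ei /eqP Ed].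
  have -> : i = k := val_inj Ei.
  by rewrite Ed.
have H0 : forall d, (if okf k e 0 d then a 0 d else act (dface k e) z)
   = act (dface (@Ordinal 3 0 isT) d) z := Ha (@Ordinal 3 0 isT).
have H1 : forall d, (if okf k e 1 d then a 1 d else act (dface k e) z)
   = act (dface (@Ordinal 3 1 isT) d) z := Ha (@Ordinal 3 1 isT).
have H2 : forall d, (if okf k e 2 d then a 2 d else act (dface k e) z)
   = act (dface (@Ordinal 3 2 isT) d) z := Ha (@Ordinal 3 2 isT).
split => d d' _ _; cbv beta; rewrite ?H0 ?H1 ?H2 -!act_comp; congr act; case: d {H0 H1 H2}; case: d'; hb.
Qed.

Definition sig1 (X : cset) (h : cell X 1) : cell X 2 := act (ddegen (@ord0 1)) h.
Definition sig2 (X : cset) (h : cell X 1) : cell X 2 := act (ddegen (@ord_max 1)) h.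
Definition gmax (X : cset) (h : cell X 1) : cell X 2 := act (dconn (@ord0 0) true) h.
Definition gmin (X : cset) (h : cell X 1) : cell X 2 := act (dconn (@ord0 0) false) h.

Lemma act_eqid (X : cset) n (H : hom n n) (h : cell X n) : H = idh n -> act H h = h.
Proof. by move=> ->; rewrite act_id. Qed.
Lemma act_eqh (X : cset) m n (H H' : hom m n) (h : cell X n) : H = H' -> act H h = act H' h.
Proof. by move=> ->. Qed.

Ltac bnds := rewrite /has_bnd; split; rewrite -!act_comp;
  first [apply: act_eqid; hb | apply: act_eqh; hb].

Lemma bnd_sig1 (X : cset) (h : cell X 1) :
  has_bnd (sig1 h) (h, h, act s1 (act p10 h), act s1 (act p11 h)).
Proof. bnds. Qed.
Lemma bnd_sig2 (X : cset) (h : cell X 1) :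
  has_bnd (sig2 h) (act s1 (act p10 h), act s1 (act p11 h), h, h).
Proof. bnds. Qed.
Lemma bnd_gmax (X : cset) (h : cell X 1) :
  has_bnd (gmax h) (h, act s1 (act p11 h), h, act s1 (act p11 h)).
Proof. bnds. Qed.
Lemma bnd_gmin (X : cset) (h : cell X 1) :
  has_bnd (gmin h) (act s1 (act p10 h), h, act s1 (act p10 h), h).
Proof. bnds. Qed.
Lemma s1K0 (X : cset) (v : cell X 0) : act p10 (act s1 v) = v.
Proof. rewrite -act_comp; apply: act_eqid; hb. Qed.
Lemma s1K1 (X : cset) (v : cell X 0) : act p11 (act s1 v) = v.
Proof. rewrite -act_comp; apply: act_eqid; hb. Qed.
Lemma bnd_pt (X : cset) (v : cell X 0) :
  has_bnd (sig1 (act s1 v)) (act s1 v, act s1 v, act s1 v, act s1 v).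
Proof. by have := bnd_sig1 (act s1 v); rewrite s1K0 s1K1. Qed.

Lemma mk_degen (X : mcset) n (i : 'I_n.+1) (h : cell X n) : marked (act (ddegen i) h).
Proof. apply: marked_degen; exists n, (ddegen i), h; split => //; exact: dg_s. Qed.
Lemma mk_conn (X : mcset) n (i : 'I_n.+1) e (h : cell X n.+1) : marked (act (dconn i e) h).
Proof. apply: marked_degen; exists n.+1, (dconn i e), h; split => //; exact: dg_c. Qed.

Lemma dfj (j : 'I_2) b : dface j b = if val j == 0 then (if b then d11 else d10) else (if b then d21 else d20).
Proof. by case: j => [[|[|//]] ?]; case: b => /=; congr dface; apply: val_inj. Qed.


Lemma box1to5 (X : mcset) (HX : comical X) (x y : cell X 0) (f g : cell X 1)
  (hf0 : act p10 f = x) (hg0 : act p10 g = x) (hf1 : act p11 f = y) (hg1 : act p11 g = y)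
  (s : cell X 2) : marked s -> has_bnd s (g, (act s1 y), f, (act s1 y)) ->
  exists t, marked t /\ has_bnd t ((act s1 x), (act s1 y), f, g).
Proof.
move=> Hs Bs.
pose a := fun (i : nat) (d : bool) => match i, d with
 | 0, false => s | 0, true => sig1 (act s1 y)
 | 1, false => sig2 f | 1, true => sig1 (act s1 y)
 | 2, false => gmax f | _, _ => s end.
have B1 := bnd_pt y. have B2 := bnd_pt x. have B3 := bnd_sig2 f. have B4 := bnd_sig2 g.
have B5 := bnd_gmax f. have B6 := bnd_gmax g. have B7 := bnd_gmin g. have B8 := bnd_sig1 g.
rewrite ?hf0 ?hf1 ?hg0 ?hg1 in B1 B2 B3 B4 B5 B6 B7 B8.
move: Bs B1 B2 B3 B4 B5 B6 B7 B8; rewrite /has_bnd /= => -[? ? ? ?] [? ? ? ?] [? ? ? ?] [? ? ? ?] [? ? ? ?] [? ? ? ?] [? ? ? ?] [? ? ? ?] [? ? ? ?].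
have F := @fill3 X HX (@Ordinal 3 0 isT) false a.
have [t [Ht [C1 C2 C3]]] : exists t, marked t /\ compat (fun i d => if okf (@Ordinal 3 0 isT) false i d then a i d else t) (fun _ _ => true).
apply: F.
- split=> d d'; case: d; case: d'; rewrite /okf /= => // _ _; congruence.
- move=> [[|[|[|//]]] Hi] [] //=; rewrite /okf //= => _;
    try exact: mk_degen; try exact: mk_conn; exact: Hs.
- move=> j [[|[|[|//]]] Hi] b d //=; rewrite dfj;
    case: j => [[|[|//]] Hj] //=; case: b; case: d; rewrite /bad_factor //= => _ _ _;
    match goal with |- marked ?u =>
      first [have -> : u = act s1 y by congruence | have -> : u = act s1 x by congruence] end;
    exact: mk_degen.
exists t; split => //.
have := C1 false false isT isT; have := C1 false true isT isT;
have := C1 true false isT isT; have := C1 true true isT isT;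
have := C2 false false isT isT; have := C2 false true isT isT;
have := C2 true false isT isT; have := C2 true true isT isT;
have := C3 false false isT isT; have := C3 false true isT isT;
have := C3 true false isT isT; have := C3 true true isT isT.
rewrite /okf /= => ? ? ? ? ? ? ? ? ? ? ? ?.
split; congruence.
Qed.

Lemma box5to1 (X : mcset) (HX : comical X) (x y : cell X 0) (f g : cell X 1)
  (hf0 : act p10 f = x) (hg0 : act p10 g = x) (hf1 : act p11 f = y) (hg1 : act p11 g = y)
  (s : cell X 2) : marked s -> has_bnd s ((act s1 x), (act s1 y), f, g) ->
  exists t, marked t /\ has_bnd t (g, (act s1 y), f, (act s1 y)).
Proof.
move=> Hs Bs.
pose a := fun (i : nat) (d : bool) => match i, d with
 | 0, false => s | 0, true => sig1 (act s1 y)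
 | 1, false => sig2 f | 1, true => sig1 (act s1 y)
 | 2, false => gmax f | _, _ => s end.
have B1 := bnd_pt y. have B2 := bnd_pt x. have B3 := bnd_sig2 f. have B4 := bnd_sig2 g.
have B5 := bnd_gmax f. have B6 := bnd_gmax g. have B7 := bnd_gmin g. have B8 := bnd_sig1 g.
rewrite ?hf0 ?hf1 ?hg0 ?hg1 in B1 B2 B3 B4 B5 B6 B7 B8.
move: Bs B1 B2 B3 B4 B5 B6 B7 B8; rewrite /has_bnd /= => -[? ? ? ?] [? ? ? ?] [? ? ? ?] [? ? ? ?] [? ? ? ?] [? ? ? ?] [? ? ? ?] [? ? ? ?] [? ? ? ?].
have F := @fill3 X HX (@Ordinal 3 2 isT) true a.
have [t [Ht [C1 C2 C3]]] : exists t, marked t /\ compat (fun i d => if okf (@Ordinal 3 2 isT) true i d then a i d else t) (fun _ _ => true).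
apply: F.
- split=> d d'; case: d; case: d'; rewrite /okf /= => // _ _; congruence.
- move=> [[|[|[|//]]] Hi] [] //=; rewrite /okf //= => _;
    try exact: mk_degen; try exact: mk_conn; exact: Hs.
- move=> j [[|[|[|//]]] Hi] b d //=; rewrite dfj;
    case: j => [[|[|//]] Hj] //=; case: b; case: d; rewrite /bad_factor //= => _ _ _;
    match goal with |- marked ?u =>
      first [have -> : u = act s1 y by congruence | have -> : u = act s1 x by congruence] end;
    exact: mk_degen.
exists t; split => //.
have := C1 false false isT isT; have := C1 false true isT isT;
have := C1 true false isT isT; have := C1 true true isT isT;
have := C2 false false isT isT; have := C2 false true isT isT;
have := C2 true false isT isT; have := C2 true true isT isT;
have := C3 false false isT isT; have := C3 false true isT isT;
have := C3 true false isT isT; have := C3 true true isT isT.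
rewrite /okf /= => ? ? ? ? ? ? ? ? ? ? ? ?.
split; congruence.
Qed.

Lemma box5to7 (X : mcset) (HX : comical X) (x y : cell X 0) (f g : cell X 1)
  (hf0 : act p10 f = x) (hg0 : act p10 g = x) (hf1 : act p11 f = y) (hg1 : act p11 g = y)
  (s : cell X 2) : marked s -> has_bnd s ((act s1 x), (act s1 y), f, g) ->
  exists t, marked t /\ has_bnd t ((act s1 x), f, (act s1 x), g).
Proof.
move=> Hs Bs.
pose a := fun (i : nat) (d : bool) => match i, d with
 | 0, false => sig1 (act s1 x) | 0, true => s
 | 1, false => sig1 (act s1 x) | 1, true => sig2 g
 | 2, false => s | _, _ => gmin g end.
have B1 := bnd_pt y. have B2 := bnd_pt x. have B3 := bnd_sig2 f. have B4 := bnd_sig2 g.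
have B5 := bnd_gmax f. have B6 := bnd_gmax g. have B7 := bnd_gmin g. have B8 := bnd_sig1 g.
rewrite ?hf0 ?hf1 ?hg0 ?hg1 in B1 B2 B3 B4 B5 B6 B7 B8.
move: Bs B1 B2 B3 B4 B5 B6 B7 B8; rewrite /has_bnd /= => -[? ? ? ?] [? ? ? ?] [? ? ? ?] [? ? ? ?] [? ? ? ?] [? ? ? ?] [? ? ? ?] [? ? ? ?] [? ? ? ?].
have F := @fill3 X HX (@Ordinal 3 2 isT) false a.
have [t [Ht [C1 C2 C3]]] : exists t, marked t /\ compat (fun i d => if okf (@Ordinal 3 2 isT) false i d then a i d else t) (fun _ _ => true).
apply: F.
- split=> d d'; case: d; case: d'; rewrite /okf /= => // _ _; congruence.
- move=> [[|[|[|//]]] Hi] [] //=; rewrite /okf //= => _;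
    try exact: mk_degen; try exact: mk_conn; exact: Hs.
- move=> j [[|[|[|//]]] Hi] b d //=; rewrite dfj;
    case: j => [[|[|//]] Hj] //=; case: b; case: d; rewrite /bad_factor //= => _ _ _;
    match goal with |- marked ?u =>
      first [have -> : u = act s1 y by congruence | have -> : u = act s1 x by congruence] end;
    exact: mk_degen.
exists t; split => //.
have := C1 false false isT isT; have := C1 false true isT isT;
have := C1 true false isT isT; have := C1 true true isT isT;
have := C2 false false isT isT; have := C2 false true isT isT;
have := C2 true false isT isT; have := C2 true true isT isT;
have := C3 false false isT isT; have := C3 false true isT isT;
have := C3 true false isT isT; have := C3 true true isT isT.
rewrite /okf /= => ? ? ? ? ? ? ? ? ? ? ? ?.
split; congruence.
Qed.

Lemma box7to5 (X : mcset) (HX : comical X) (x y : cell X 0) (f g : cell X 1)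
  (hf0 : act p10 f = x) (hg0 : act p10 g = x) (hf1 : act p11 f = y) (hg1 : act p11 g = y)
  (s : cell X 2) : marked s -> has_bnd s ((act s1 x), f, (act s1 x), g) ->
  exists t, marked t /\ has_bnd t ((act s1 x), (act s1 y), f, g).
Proof.
move=> Hs Bs.
pose a := fun (i : nat) (d : bool) => match i, d with
 | 0, false => sig1 (act s1 x) | 0, true => s
 | 1, false => sig1 (act s1 x) | 1, true => sig2 g
 | 2, false => s | _, _ => gmin g end.
have B1 := bnd_pt y. have B2 := bnd_pt x. have B3 := bnd_sig2 f. have B4 := bnd_sig2 g.
have B5 := bnd_gmax f. have B6 := bnd_gmax g. have B7 := bnd_gmin g. have B8 := bnd_sig1 g.
rewrite ?hf0 ?hf1 ?hg0 ?hg1 in B1 B2 B3 B4 B5 B6 B7 B8.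
move: Bs B1 B2 B3 B4 B5 B6 B7 B8; rewrite /has_bnd /= => -[? ? ? ?] [? ? ? ?] [? ? ? ?] [? ? ? ?] [? ? ? ?] [? ? ? ?] [? ? ? ?] [? ? ? ?] [? ? ? ?].
have F := @fill3 X HX (@Ordinal 3 0 isT) true a.
have [t [Ht [C1 C2 C3]]] : exists t, marked t /\ compat (fun i d => if okf (@Ordinal 3 0 isT) true i d then a i d else t) (fun _ _ => true).
apply: F.
- split=> d d'; case: d; case: d'; rewrite /okf /= => // _ _; congruence.
- move=> [[|[|[|//]]] Hi] [] //=; rewrite /okf //= => _;
    try exact: mk_degen; try exact: mk_conn; exact: Hs.
- move=> j [[|[|[|//]]] Hi] b d //=; rewrite dfj;
    case: j => [[|[|//]] Hj] //=; case: b; case: d; rewrite /bad_factor //= => _ _ _;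
    match goal with |- marked ?u =>
      first [have -> : u = act s1 y by congruence | have -> : u = act s1 x by congruence] end;
    exact: mk_degen.
exists t; split => //.
have := C1 false false isT isT; have := C1 false true isT isT;
have := C1 true false isT isT; have := C1 true true isT isT;
have := C2 false false isT isT; have := C2 false true isT isT;
have := C2 true false isT isT; have := C2 true true isT isT;
have := C3 false false isT isT; have := C3 false true isT isT;
have := C3 true false isT isT; have := C3 true true isT isT.
rewrite /okf /= => ? ? ? ? ? ? ? ? ? ? ? ?.
split; congruence.
Qed.

Lemma box5to3 (X : mcset) (HX : comical X) (x y : cell X 0) (f g : cell X 1)
  (hf0 : act p10 f = x) (hg0 : act p10 g = x) (hf1 : act p11 f = y) (hg1 : act p11 g = y)
  (s : cell X 2) : marked s -> has_bnd s ((act s1 x), (act s1 y), f, g) ->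
  exists t, marked t /\ has_bnd t (f, g, (act s1 x), (act s1 y)).
Proof.
move=> Hs Bs.
pose a := fun (i : nat) (d : bool) => match i, d with
 | 0, false => s | 0, true => sig2 g
 | 1, false => sig1 (act s1 x) | 1, true => sig1 (act s1 y)
 | 2, false => s | _, _ => sig1 g end.
have B1 := bnd_pt y. have B2 := bnd_pt x. have B3 := bnd_sig2 f. have B4 := bnd_sig2 g.
have B5 := bnd_gmax f. have B6 := bnd_gmax g. have B7 := bnd_gmin g. have B8 := bnd_sig1 g.
rewrite ?hf0 ?hf1 ?hg0 ?hg1 in B1 B2 B3 B4 B5 B6 B7 B8.
move: Bs B1 B2 B3 B4 B5 B6 B7 B8; rewrite /has_bnd /= => -[? ? ? ?] [? ? ? ?] [? ? ? ?] [? ? ? ?] [? ? ? ?] [? ? ? ?] [? ? ? ?] [? ? ? ?] [? ? ? ?].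
have F := @fill3 X HX (@Ordinal 3 2 isT) false a.
have [t [Ht [C1 C2 C3]]] : exists t, marked t /\ compat (fun i d => if okf (@Ordinal 3 2 isT) false i d then a i d else t) (fun _ _ => true).
apply: F.
- split=> d d'; case: d; case: d'; rewrite /okf /= => // _ _; congruence.
- move=> [[|[|[|//]]] Hi] [] //=; rewrite /okf //= => _;
    try exact: mk_degen; try exact: mk_conn; exact: Hs.
- move=> j [[|[|[|//]]] Hi] b d //=; rewrite dfj;
    case: j => [[|[|//]] Hj] //=; case: b; case: d; rewrite /bad_factor //= => _ _ _;
    match goal with |- marked ?u =>
      first [have -> : u = act s1 y by congruence | have -> : u = act s1 x by congruence] end;
    exact: mk_degen.
exists t; split => //.
have := C1 false false isT isT; have := C1 false true isT isT;
have := C1 true false isT isT; have := C1 true true isT isT;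
have := C2 false false isT isT; have := C2 false true isT isT;
have := C2 true false isT isT; have := C2 true true isT isT;
have := C3 false false isT isT; have := C3 false true isT isT;
have := C3 true false isT isT; have := C3 true true isT isT.
rewrite /okf /= => ? ? ? ? ? ? ? ? ? ? ? ?.
split; congruence.
Qed.

Lemma box3to5 (X : mcset) (HX : comical X) (x y : cell X 0) (f g : cell X 1)
  (hf0 : act p10 f = x) (hg0 : act p10 g = x) (hf1 : act p11 f = y) (hg1 : act p11 g = y)
  (s : cell X 2) : marked s -> has_bnd s (f, g, (act s1 x), (act s1 y)) ->
  exists t, marked t /\ has_bnd t ((act s1 x), (act s1 y), f, g).
Proof.
move=> Hs Bs.
pose a := fun (i : nat) (d : bool) => match i, d with
 | 0, false => s | 0, true => sig2 g
 | 1, false => sig1 (act s1 x) | 1, true => sig1 (act s1 y)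
 | 2, false => s | _, _ => sig1 g end.
have B1 := bnd_pt y. have B2 := bnd_pt x. have B3 := bnd_sig2 f. have B4 := bnd_sig2 g.
have B5 := bnd_gmax f. have B6 := bnd_gmax g. have B7 := bnd_gmin g. have B8 := bnd_sig1 g.
rewrite ?hf0 ?hf1 ?hg0 ?hg1 in B1 B2 B3 B4 B5 B6 B7 B8.
move: Bs B1 B2 B3 B4 B5 B6 B7 B8; rewrite /has_bnd /= => -[? ? ? ?] [? ? ? ?] [? ? ? ?] [? ? ? ?] [? ? ? ?] [? ? ? ?] [? ? ? ?] [? ? ? ?] [? ? ? ?].
have F := @fill3 X HX (@Ordinal 3 0 isT) false a.
have [t [Ht [C1 C2 C3]]] : exists t, marked t /\ compat (fun i d => if okf (@Ordinal 3 0 isT) false i d then a i d else t) (fun _ _ => true).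
apply: F.
- split=> d d'; case: d; case: d'; rewrite /okf /= => // _ _; congruence.
- move=> [[|[|[|//]]] Hi] [] //=; rewrite /okf //= => _;
    try exact: mk_degen; try exact: mk_conn; exact: Hs.
- move=> j [[|[|[|//]]] Hi] b d //=; rewrite dfj;
    case: j => [[|[|//]] Hj] //=; case: b; case: d; rewrite /bad_factor //= => _ _ _;
    match goal with |- marked ?u =>
      first [have -> : u = act s1 y by congruence | have -> : u = act s1 x by congruence] end;
    exact: mk_degen.
exists t; split => //.
have := C1 false false isT isT; have := C1 false true isT isT;
have := C1 true false isT isT; have := C1 true true isT isT;
have := C2 false false isT isT; have := C2 false true isT isT;
have := C2 true false isT isT; have := C2 true true isT isT;
have := C3 false false isT isT; have := C3 false true isT isT;
have := C3 true false isT isT; have := C3 true true isT isT.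
rewrite /okf /= => ? ? ? ? ? ? ? ? ? ? ? ?.
split; congruence.
Qed.

Lemma box1to6 (X : mcset) (HX : comical X) (x y : cell X 0) (f g : cell X 1)
  (hf0 : act p10 f = x) (hg0 : act p10 g = x) (hf1 : act p11 f = y) (hg1 : act p11 g = y)
  (s : cell X 2) : marked s -> has_bnd s (g, (act s1 y), f, (act s1 y)) ->
  exists t, marked t /\ has_bnd t ((act s1 x), (act s1 y), g, f).
Proof.
move=> Hs Bs.
pose a := fun (i : nat) (d : bool) => match i, d with
 | 0, false => sig2 g | 0, true => sig1 (act s1 y)
 | 1, false => s | 1, true => sig1 (act s1 y)
 | 2, false => gmax g | _, _ => s end.
have B1 := bnd_pt y. have B2 := bnd_pt x. have B3 := bnd_sig2 f. have B4 := bnd_sig2 g.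
have B5 := bnd_gmax f. have B6 := bnd_gmax g. have B7 := bnd_gmin g. have B8 := bnd_sig1 g.
rewrite ?hf0 ?hf1 ?hg0 ?hg1 in B1 B2 B3 B4 B5 B6 B7 B8.
move: Bs B1 B2 B3 B4 B5 B6 B7 B8; rewrite /has_bnd /= => -[? ? ? ?] [? ? ? ?] [? ? ? ?] [? ? ? ?] [? ? ? ?] [? ? ? ?] [? ? ? ?] [? ? ? ?] [? ? ? ?].
have F := @fill3 X HX (@Ordinal 3 1 isT) false a.
have [t [Ht [C1 C2 C3]]] : exists t, marked t /\ compat (fun i d => if okf (@Ordinal 3 1 isT) false i d then a i d else t) (fun _ _ => true).
apply: F.
- split=> d d'; case: d; case: d'; rewrite /okf /= => // _ _; congruence.
- move=> [[|[|[|//]]] Hi] [] //=; rewrite /okf //= => _;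
    try exact: mk_degen; try exact: mk_conn; exact: Hs.
- move=> j [[|[|[|//]]] Hi] b d //=; rewrite dfj;
    case: j => [[|[|//]] Hj] //=; case: b; case: d; rewrite /bad_factor //= => _ _ _;
    match goal with |- marked ?u =>
      first [have -> : u = act s1 y by congruence | have -> : u = act s1 x by congruence] end;
    exact: mk_degen.
exists t; split => //.
have := C1 false false isT isT; have := C1 false true isT isT;
have := C1 true false isT isT; have := C1 true true isT isT;
have := C2 false false isT isT; have := C2 false true isT isT;
have := C2 true false isT isT; have := C2 true true isT isT;
have := C3 false false isT isT; have := C3 false true isT isT;
have := C3 true false isT isT; have := C3 true true isT isT.
rewrite /okf /= => ? ? ? ? ? ? ? ? ? ? ? ?.
split; congruence.
Qed.

Lemma liftC (X : mcset) q q' :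
  (forall s : cell X 2, marked s -> has_bnd s q -> exists t, marked t /\ has_bnd t q') ->
  (exists s : cell X 2, marked s /\ has_bnd s q) -> exists t : cell X 2, marked t /\ has_bnd t q'.
Proof. by move=> P [s [Hs Bs]]; exact: P Hs Bs. Qed.

Unset Implicit Arguments.

Theorem proposition4p1 (X : mcset) (HX : comical X) (x y : cell X 0)
  (f g : cell X 1)
  (hf0 : act p10 f = x) (hg0 : act p10 g = x)
  (hf1 : act p11 f = y) (hg1 : act p11 g = y)
  (i : 'I_8)
  (Hi : exists s : cell X 2, marked s /\ has_bnd s (bnd x y f g i)) :
  forall j : 'I_8, exists s : cell X 2, marked s /\ has_bnd s (bnd x y f g j).
Proof.
pose C q := exists s : cell X 2, marked s /\ has_bnd s q.
have i15 := liftC (box1to5 HX hf0 hg0 hf1 hg1).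
have i51 := liftC (box5to1 HX hf0 hg0 hf1 hg1).
have i57 := liftC (box5to7 HX hf0 hg0 hf1 hg1).
have i75 := liftC (box7to5 HX hf0 hg0 hf1 hg1).
have i53 := liftC (box5to3 HX hf0 hg0 hf1 hg1).
have i35 := liftC (box3to5 HX hf0 hg0 hf1 hg1).
have i16 := liftC (box1to6 HX hf0 hg0 hf1 hg1).
have i26 := liftC (box1to5 HX hg0 hf0 hg1 hf1).
have i62 := liftC (box5to1 HX hg0 hf0 hg1 hf1).
have i68 := liftC (box5to7 HX hg0 hf0 hg1 hf1).
have i86 := liftC (box7to5 HX hg0 hf0 hg1 hf1).
have i64 := liftC (box5to3 HX hg0 hf0 hg1 hf1).
have i46 := liftC (box3to5 HX hg0 hf0 hg1 hf1).
have i25 := liftC (box1to6 HX hg0 hf0 hg1 hf1).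
have to5 : forall j : 'I_8, C (bnd x y f g j) -> C (act s1 x, act s1 y, f, g).
  case=> [[|[|[|[|[|[|[|[|//]]]]]]]] ?] /= H.
  - exact: i15 H.
  - exact: i25 (i62 (i26 H)).
  - exact: i35 H.
  - exact: i25 (i62 (i46 H)).
  - exact: H.
  - exact: i25 (i62 H).
  - exact: i75 H.
  - exact: i25 (i62 (i86 H)).
have H5 := to5 i Hi.
have H6 := i16 (i51 H5).
case=> [[|[|[|[|[|[|[|[|//]]]]]]]] ?] /=.
- exact: i51 H5.
- exact: i62 H6.
- exact: i53 H5.
- exact: i64 H6.
- exact: H5.
- exact: H6.
- exact: i57 H5.
- exact: i68 H6.
Qed.
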